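(* Let $(\mathbb{X},\oplus,\otimes,\mathbb{0},\mathbb{1})$ be a linearly ordered, algebraically complete idempotent semifield, let $\bm{A}_1,\ldots,\bm{A}_m\in\mathbb{X}^{n\times n}$ be reciprocal matrices (i.e. $\bm{A}_i^{-}=\bm{A}_i$) and $w_1,\ldots,w_m\in\mathbb{X}$ scalars such that $\bm{B}=w_1\bm{A}_1\oplus\cdots\oplus w_m\bm{A}_m$ has no zero entries. Let $\mu$ be the spectral radius of $\bm{B}$ and $\bm{B}_{\mu}=\mu^{-1}\bm{B}$. Consider the problem of minimizing $\max_{1\le i\le m} w_i\, d(\bm{A}_i,\bm{x}\bm{x}^{-})$ (i.e. $\bigoplus_{i=1}^m w_i d(\bm{A}_i,\bm{x}\bm{x}^{-})$) over all regular vectors $\bm{x}\in\mathbb{X}^n$. Then the minimum value equals $\mu$, and the set of all solutions is $\{\bm{x}=\bm{B}_{\mu}^{\ast}\bm{u}:\bm{u}\in\mathbb{X}^n,\ \bm{u}\ne\bm{0}\}$.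
   Context: An idempotent semifield is a set $\mathbb{X}$ with associative, commutative operations $\oplus$ (addition) and $\otimes$ (multiplication, usually omitted in writing) with neutral elements $\mathbb{0}$ and $\mathbb{1}$, multiplication distributing over addition, idempotent addition ($x\oplus x=x$), and every nonzero $x$ having an inverse $x^{-1}$ with $xx^{-1}=\mathbb{1}$. It is assumed linearly ordered by the order $x\le y \iff x\oplus y=y$, and algebraically complete: $x^p=a$ is solvable for every $a$ and integer $p>0$, so rational powers are defined. Matrix and vector operations (including scalar multiplication) use the usual formulas with $\oplus,\otimes$ in place of $+,\times$; $\bm{0}$ is the zero vector; a vector is regular if it has no zero entries. For a nonzero column vector $\bm{x}=(x_i)$, $\bm{x}^{-}$ is the row vector with entries $x_i^{-1}$ if $x_i\ne\mathbb{0}$ and $\mathbb{0}$ otherwise. For a nonzero matrix $\bm{A}=(a_{ij})$, $\bm{A}^{-}=(a^{-}_{ij})$ with $a^{-}_{ij}=a_{ji}^{-1}$ if $a_{ji}\neq\mathbb{0}$ and $\mathbb{0}$ otherwise. The trace is $\mathrm{tr}\,\bm{A}=a_{11}\oplus\cdots\oplus a_{nn}$. The distance between square matrices is $d(\bm{A},\bm{B})=\mathrm{tr}(\bm{B}^{-}\bm{A})\oplus\mathrm{tr}(\bm{A}^{-}\bm{B})$. $\bm{I}$ is the identity matrix, $\bm{A}^0=\bm{I}$, $\bm{A}^p=\bm{A}^{p-1}\bm{A}$. The spectral radius of $\bm{A}$ of order $n$ is $\lambda=\bigoplus_{k=1}^{n}\bigoplus_{1\le i_1,\ldots,i_k\le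 n}(a_{i_1i_2}a_{i_2i_3}\cdots a_{i_ki_1})^{1/k}$. For a square matrix $\bm{M}$ of order $n$, $\bm{M}^{\ast}=\bm{I}\oplus\bm{M}\oplus\cdots\oplus\bm{M}^{n-1}$. *)

(* Defs.v *)
From mathcomp Require Import all_boot.
Set Warnings "-notation-overridden".
Set Implicit Arguments. Unset Strict Implicit. Unset Printing Implicit Defensive.

(* A linearly ordered, algebraically complete idempotent semifield.
   [sinv 0 = 0] is a harmless convention (inverse of 0 is not defined in the
   paper); [sroot k a] is a chosen solution of x^k = a (algebraic completeness);
   it is in fact unique in a linearly ordered idempotent semifield. *)
Record idem_semifield := IdemSemifield {
  car :> Type;
  sadd : car -> car -> car;
  smul : car -> car -> car;
  szero : car;
  sone : car;
  sinv : car -> car;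
  sroot : nat -> car -> car;
  saddA : forall x y z, sadd x (sadd y z) = sadd (sadd x y) z;
  saddC : forall x y, sadd x y = sadd y x;
  sadd0 : forall x, sadd szero x = x;
  smulA : forall x y z, smul x (smul y z) = smul (smul x y) z;
  smulC : forall x y, smul x y = smul y x;
  smul1 : forall x, smul sone x = x;
  smul0 : forall x, smul szero x = szero;
  smulDl : forall x y z, smul (sadd x y) z = sadd (smul x z) (smul y z);
  saddxx : forall x, sadd x x = x;
  sone_neq0 : sone <> szero;
  smulV : forall x, x <> szero -> smul x (sinv x) = sone;
  sinv0 : sinv szero = szero;
  slinear : forall x y, sadd x y = x \/ sadd x y = y;
  sroot_spec : forall k a, 0 < k -> iter k (smul (sroot k a)) sone = a
}.

Section Defs.
Variable X : idem_semifield.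

Local Notation "x (+) y" := (sadd x y) (at level 50, left associativity).
Local Notation "x (x) y" := (smul x y) (at level 40, left associativity).

Definition sle (x y : X) : Prop := x (+) y = y.

Definition spow (x : X) (p : nat) : X := iter p (smul x) (sone X).

Definition vec n := 'I_n -> X.
Definition mat n := 'I_n -> 'I_n -> X.

Definition mxmul n (A B : mat n) : mat n :=
  fun i j => \big[@sadd X/szero X]_(k < n) (A i k (x) B k j).
Definition mxvmul n (A : mat n) (u : vec n) : vec n :=
  fun i => \big[@sadd X/szero X]_(k < n) (A i k (x) u k).
Definition mxadd n (A B : mat n) : mat n := fun i j => A i j (+) B i j.
Definition mxscale n (c : X) (A : mat n) : mat n := fun i j => c (x) A i j.
Definition mxzero n : mat n := fun _ _ => szero X.
Definition mxid n : mat n := fun i j => if i == j then sone X else szero X.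
Definition mxpow n (A : mat n) (p : nat) : mat n := iter p (fun M => mxmul M A) (@mxid n).

(* A^- : (A^-)_{ij} = a_{ji}^{-1} (0 if a_{ji} = 0, via sinv0) *)
Definition mxconj n (A : mat n) : mat n := fun i j => sinv (A j i).
(* x x^- : entries x_i x_j^{-1} (0 if x_j = 0, via sinv0) *)
Definition outer_conj n (x : vec n) : mat n := fun i j => x i (x) sinv (x j).

Definition mxtr n (A : mat n) : X := \big[@sadd X/szero X]_(i < n) A i i.
Definition mxdist n (A B : mat n) : X :=
  mxtr (mxmul (mxconj B) A) (+) mxtr (mxmul (mxconj A) B).

Definition mxstar n (M : mat n) : mat n :=
  fun i j => \big[@sadd X/szero X]_(p < n) mxpow M p i j.

Definition cycle_prod n k (A : mat n) (s : {ffun 'I_k -> 'I_n}) : X :=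
  \big[@smul X/sone X]_(j < k) A (s j) (s (ordS j)).

Definition spec_rad n (A : mat n) : X :=
  \big[@sadd X/szero X]_(1 <= k < n.+1)
     \big[@sadd X/szero X]_(s : {ffun 'I_k -> 'I_n}) sroot k (cycle_prod A s).

Definition regular n (x : vec n) : Prop := forall i, x i <> szero X.
Definition vec_nonzero n (u : vec n) : Prop := ~ (forall i, u i = szero X).
Definition reciprocal n (A : mat n) : Prop := forall i j, mxconj A i j = A i j.

End Defs.

(* Main.v *)
From HB Require Import structures.
Require Import Defs.
From mathcomp Require Import all_boot.
From Stdlib Require Import Classical.
From mathcomp Require Import zify.
Set Implicit Arguments. Unset Strict Implicit. Unset Printing Implicit Defensive.
Set Warnings "-notation-overridden -redundant-canonical-projection".

Section S.
Variable X : idem_semifield.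
Local Notation "0s" := (szero X).
Local Notation "1s" := (sone X).
Local Notation sadd := (@sadd X).
Local Notation smul := (@smul X).

HB.instance Definition _ := Monoid.isComLaw.Build X 0s sadd (@saddA X) (@saddC X) (@sadd0 X).
HB.instance Definition _ := Monoid.isComLaw.Build X 1s smul (@smulA X) (@smulC X) (@smul1 X).

Lemma sadd0r (x : X) : sadd x 0s = x. Proof. by rewrite saddC sadd0. Qed.
Lemma smul1r (x : X) : smul x 1s = x. Proof. by rewrite smulC smul1. Qed.
Lemma smul0r (x : X) : smul x 0s = 0s. Proof. by rewrite smulC smul0. Qed.
Lemma smulDr (x y z : X) : smul z (sadd x y) = sadd (smul z x) (smul z y).
Proof. by rewrite smulC smulDl !(smulC z). Qed.

Lemma le_refl (x : X) : sle x x. Proof. exact: saddxx. Qed.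
Lemma le_trans (x y z : X) : sle x y -> sle y z -> sle x z.
Proof. by rewrite /sle => h1 h2; rewrite -h2 saddA h1. Qed.
Lemma le_anti (x y : X) : sle x y -> sle y x -> x = y.
Proof. by rewrite /sle => h1 h2; rewrite -h2 saddC h1. Qed.
Lemma le_total (x y : X) : sle x y \/ sle y x.
Proof. by case: (slinear x y) => h; [right; rewrite /sle saddC | left]. Qed.
Lemma le_addl (x y : X) : sle x (sadd x y).
Proof. by rewrite /sle saddA saddxx. Qed.
Lemma le_addr (x y : X) : sle y (sadd x y).
Proof. by rewrite saddC; exact: le_addl. Qed.
Lemma le_lub (x y z : X) : sle x z -> sle y z -> sle (sadd x y) z.
Proof. by rewrite /sle => h1 h2; rewrite -saddA h2 h1. Qed.
Lemma le_add2 (x y x' y' : X) : sle x y -> sle x' y' -> sle (sadd x x') (sadd y y').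
Proof.
move=> h1 h2; apply: le_lub.
  exact: le_trans h1 (le_addl _ _).
exact: le_trans h2 (le_addr _ _).
Qed.
Lemma le0 (x : X) : sle 0s x. Proof. exact: sadd0. Qed.
Lemma le_mul2l (x y z : X) : sle x y -> sle (smul z x) (smul z y).
Proof. by rewrite /sle => h; rewrite -smulDr h. Qed.
Lemma le_mul2r (x y z : X) : sle x y -> sle (smul x z) (smul y z).
Proof. by move=> h; rewrite !(smulC _ z); exact: le_mul2l. Qed.
Lemma le_mul2 (a b c d : X) : sle a b -> sle c d -> sle (smul a c) (smul b d).
Proof. move=> h1 h2; exact: le_trans (le_mul2r _ h1) (le_mul2l _ h2). Qed.

Lemma mulVs (x : X) : x <> 0s -> smul (sinv x) x = 1s.
Proof. by move=> h; rewrite smulC smulV. Qed.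
Lemma mul_eq0 (x y : X) : smul x y = 0s -> x = 0s \/ y = 0s.
Proof.
move=> h; case: (classic (x = 0s)) => hx; [by left| right].
by rewrite -[y]smul1 -(mulVs hx) -smulA h smul0r.
Qed.
Lemma mul_neq0 (x y : X) : x <> 0s -> y <> 0s -> smul x y <> 0s.
Proof. by move=> hx hy /mul_eq0 []. Qed.
Lemma inv_neq0 (x : X) : x <> 0s -> sinv x <> 0s.
Proof. move=> hx h; apply: (@sone_neq0 X); by rewrite -(smulV hx) h smul0r. Qed.
Lemma invK (x : X) : sinv (sinv x) = x.
Proof.
case: (classic (x = 0s)) => hx; first by rewrite hx !sinv0.
have h := smulV (inv_neq0 hx).
by rewrite -[sinv (sinv x)]smul1 -(smulV hx) -smulA h smul1r.
Qed.
Lemma inv_uniq (a b : X) : smul a b = 1s -> b = sinv a.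
Proof.
move=> h; have ha : a <> 0s by move=> e; apply: (@sone_neq0 X); rewrite -h e smul0.
by rewrite -[b]smul1 -(mulVs ha) -smulA h smul1r.
Qed.
Lemma invM (x y : X) : sinv (smul x y) = smul (sinv x) (sinv y).
Proof.
case: (classic (x = 0s)) => hx; first by rewrite hx smul0 sinv0 smul0.
case: (classic (y = 0s)) => hy; first by rewrite hy smul0r sinv0 smul0r.
symmetry; apply: inv_uniq.
by rewrite -smulA [smul y _]smulA [smul y _]smulC -smulA (smulV hy) smul1r (smulV hx).
Qed.
Lemma le_neq0 (x y : X) : sle x y -> x <> 0s -> y <> 0s.
Proof. by rewrite /sle => h hx hy; apply: hx; move: h; rewrite hy sadd0r. Qed.

Lemma le_big (I : Type) (r : seq I) (P : pred I) (F : I -> X) c :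
  (forall i, P i -> sle (F i) c) -> sle (\big[sadd/0s]_(i <- r | P i) F i) c.
Proof.
move=> h; apply: (big_ind (fun y => sle y c)); [exact: le0| move=> ? ? ? ?; exact: le_lub| exact: h].
Qed.
Lemma le_big_seq (I : eqType) (r : seq I) (P : pred I) (F : I -> X) c :
  (forall i, i \in r -> P i -> sle (F i) c) -> sle (\big[sadd/0s]_(i <- r | P i) F i) c.
Proof.
move=> h; rewrite big_seq_cond; apply: le_big => i /andP[]; exact: h.
Qed.
Lemma big_ge (I : eqType) (r : seq I) (P : pred I) (F : I -> X) i :
  i \in r -> P i -> sle (F i) (\big[sadd/0s]_(j <- r | P j) F j).
Proof.
elim: r => // a r IH; rewrite inE big_cons => /orP[/eqP<-|hi] hP.
  by rewrite hP; exact: le_addl.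
case: (P a); last exact: IH.
exact: le_trans (IH hi hP) (le_addr _ _).
Qed.
Lemma big_geT (I : finType) (F : I -> X) i : sle (F i) (\big[sadd/0s]_j F j).
Proof. by apply: big_ge => //; rewrite mem_index_enum. Qed.
Lemma big_attained (I : Type) (r : seq I) (P : pred I) (F : I -> X) :
  \big[sadd/0s]_(i <- r | P i) F i = 0s \/
  exists i, P i /\ \big[sadd/0s]_(i <- r | P i) F i = F i.
Proof.
apply: (big_ind (fun y => y = 0s \/ exists i, P i /\ y = F i)); first by left.
  move=> x y hx hy; case: (slinear x y) => ->; by [].
by move=> i hi; right; exists i.
Qed.
Lemma big_distr (I : Type) (r : seq I) (P : pred I) (F : I -> X) c :
  smul c (\big[sadd/0s]_(i <- r | P i) F i) = \big[sadd/0s]_(i <- r | P i) smul c (F i).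
Proof.
elim/big_rec2: _ => [|i y1 y2 _ <-]; first by rewrite smul0r.
by rewrite smulDr.
Qed.
Lemma big_distl (I : Type) (r : seq I) (P : pred I) (F : I -> X) c :
  smul (\big[sadd/0s]_(i <- r | P i) F i) c = \big[sadd/0s]_(i <- r | P i) smul (F i) c.
Proof. rewrite smulC big_distr; apply: eq_bigr => i _; exact: smulC. Qed.
Lemma le_big2 (I : Type) (r : seq I) (P : pred I) (F G : I -> X) :
  (forall i, P i -> sle (F i) (G i)) ->
  sle (\big[sadd/0s]_(i <- r | P i) F i) (\big[sadd/0s]_(i <- r | P i) G i).
Proof. move=> h; apply: (big_ind2 (fun a b => sle a b)); [exact: le_refl| move=> ? ? ? ? ? ?; exact: le_add2| exact: h]. Qed.
Lemma le_prod2 (I : Type) (r : seq I) (P : pred I) (F G : I -> X) :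
  (forall i, P i -> sle (F i) (G i)) ->
  sle (\big[smul/1s]_(i <- r | P i) F i) (\big[smul/1s]_(i <- r | P i) G i).
Proof. move=> h; apply: (big_ind2 (fun a b => sle a b)); [exact: le_refl| move=> ? ? ? ? ? ?; exact: le_mul2| exact: h]. Qed.

Lemma spowS (x : X) k : spow x k.+1 = smul x (spow x k). Proof. by []. Qed.
Lemma spow_mul (x y : X) k : spow (smul x y) k = smul (spow x k) (spow y k).
Proof.
elim: k => [|k IH]; first by rewrite /spow /= smul1.
rewrite !spowS IH -!smulA; congr smul; rewrite !smulA; congr smul; exact: smulC.
Qed.
Lemma spow1 k : spow 1s k = 1s.
Proof. by elim: k => // k IH; rewrite spowS IH smul1. Qed.
Lemma le_spow (x y : X) k : sle x y -> sle (spow x k) (spow y k).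
Proof. move=> h; elim: k => [|k IH]; [exact: le_refl| exact: le_mul2]. Qed.
Lemma spow_cancel (r q : X) k : 0 < k -> sle (spow r k) (spow q k) -> sle r q.
Proof.
move=> hk h; case: (le_total r q) => // hqr.
have e : spow r k = spow q k by apply: le_anti => //; exact: le_spow.
case: (classic (r = 0s)) => hr0.
  by move: hqr; rewrite /sle hr0 sadd0r => ->; exact: le_refl.
pose t := smul q (sinv r).
have ht1 : sle t 1s by rewrite /t -(smulV hr0); exact: le_mul2r.
have htk : spow t k = 1s by rewrite /t spow_mul -e -spow_mul smulV // spow1.
have hle : forall j, sle (spow t j) 1s.
  by move=> j; rewrite -(spow1 j); exact: le_spow.
have h1t : sle 1s t.
  by clear -htk hle hk; case: k hk htk => // k _ <-; rewrite spowS -[t in sle _ t]smul1r; apply: le_mul2l.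
have -> : q = smul t r by rewrite /t -smulA mulVs // smul1r.
by rewrite (le_anti ht1 h1t) smul1; exact: le_refl.
Qed.

Lemma nuniq_decomp (T : eqType) (l : seq T) : ~~ uniq l ->
  exists l1 v l2 l3, l = l1 ++ v :: l2 ++ v :: l3 /\ uniq (v :: l2).
Proof.
elim: l => // a l IH /=; rewrite negb_and negbK.
case: (boolP (uniq l)) => hu h.
  rewrite orbF in h.
  case/splitPr: h hu => p1 p2 hu.
  exists [::], a, p1, p2; split => //.
  move: hu; rewrite cat_uniq /= => /and3P[hp1 hh _].
  rewrite hp1 andbT; apply/negP => ha; move: hh; by rewrite ha.
have [l1 [v [l2 [l3 [-> h2]]]]] := IH hu.
by exists (a :: l1), v, l2, l3.
Qed.

Section Paths.
Variable n : nat.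
Variable M : mat X n.

Fixpoint pp (a : 'I_n) (l : seq 'I_n) : X :=
  match l with [::] => 1s | b :: l' => smul (M a b) (pp b l') end.

Lemma pp_cat a l1 l2 : pp a (l1 ++ l2) = smul (pp a l1) (pp (last a l1) l2).
Proof.
elim: l1 a => [|b l1 IH] a /=; first by rewrite smul1.
by rewrite IH smulA.
Qed.

Lemma pp_rcons a l b : pp a (rcons l b) = smul (pp a l) (M (last a l) b).
Proof. by rewrite -cats1 pp_cat /= smul1r. Qed.

Lemma mxpowS p : mxpow M p.+1 = mxmul (mxpow M p) M. Proof. by []. Qed.

Lemma pow_path p i j : mxpow M p i j = 0s \/
  exists l, [/\ size l = p, last i l = j & mxpow M p i j = pp i l].
Proof.
elim: p j => [|p IH] j.
  rewrite /mxpow /= /mxid; case: eqP => [<-|_]; last by left.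
  by right; exists [::].
rewrite mxpowS /mxmul.
case: (big_attained (index_enum 'I_n) xpredT (fun k => smul (mxpow M p i k) (M k j))) => [->|[k [_ ->]]]; first by left.
case: (IH k) => [->|[l [hs hl he]]]; first by left; rewrite smul0.
right; exists (rcons l j); split; first by rewrite size_rcons hs.
  by rewrite last_rcons.
by rewrite pp_rcons he hl.
Qed.

Lemma path_le_pow a l : sle (pp a l) (mxpow M (size l) a (last a l)).
Proof.
elim/last_ind: l => [|l b IH].
  by rewrite /mxpow /= /mxid eqxx; exact: le_refl.
rewrite pp_rcons size_rcons last_rcons mxpowS /mxmul.
apply: le_trans (big_geT (fun k => smul (mxpow M (size l) a k) (M k b)) (last a l)).
exact: le_mul2r.
Qed.

Lemma pp_big a l : pp a l = \big[smul/1s]_(j < size l) M (nth a (a :: l) j) (nth a l j).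
Proof.
elim: l a => [|b l IH] a /=; first by rewrite big_ord0.
rewrite big_ord_recl /= IH; congr smul; apply: eq_bigr => j _ /=.
have hj : j < size l := ltn_ord j.
rewrite add0n (set_nth_default a b hj); congr M.
by rewrite (set_nth_default a b) //= ltnW.
Qed.

Hypothesis hcyc : forall k (s : {ffun 'I_k -> 'I_n}), 0 < k -> k <= n ->
  sle (cycle_prod M s) 1s.

Lemma cycle_le v l2 : uniq (v :: l2) -> sle (pp v (rcons l2 v)) 1s.
Proof.
move=> hu.
have hk : size (v :: l2) <= n.
  by rewrite -(card_uniqP hu); apply: leq_trans (max_card _) _; rewrite card_ord.
pose k := (size l2).+1.
pose s := [ffun j : 'I_k => nth v (v :: l2) j].
have -> : pp v (rcons l2 v) = cycle_prod M s.
  rewrite pp_big /cycle_prod size_rcons; apply: eq_bigr => j _.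
  rewrite !ffunE; congr M.
    by rewrite -[v :: rcons l2 v]/(rcons (v :: l2) v) nth_rcons ltn_ord.
  rewrite nth_rcons /=.
  case: ltnP => hj.
    by rewrite modn_small.
  have ej : (j : nat) = size l2 by apply/eqP; rewrite eqn_leq hj -ltnS ltn_ord.
  by rewrite ej eqxx modnn.
exact: hcyc.
Qed.

Lemma path_le_star a l : sle (pp a l) (mxstar M a (last a l)).
Proof.
have [N] := ubnP (size l); elim: N a l => // N IH a l hN.
case: (ltnP (size l) n) => hs.
  apply: le_trans (path_le_pow a l) _.
  exact: (big_geT (fun p : 'I_n => mxpow M p a (last a l)) (Ordinal hs)).
have hnu : ~~ uniq (a :: l).
  apply/negP => hu; move: (card_uniqP hu) (max_card (mem (a :: l))).
  by rewrite card_ord /= => ->; rewrite ltnNge hs.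
have [l1 [v [l2 [l3 [el hu]]]]] := nuniq_decomp hnu.
case: l1 el => [|b l1] /= el.
  case: el => ea el; subst v.
  have el' : l = rcons l2 a ++ l3 by rewrite el cat_rcons.
  have hs3 : size l3 < N.
    move: hN; rewrite el' size_cat size_rcons; move: (size l2) (size l3) => p q; lia.
  rewrite el' pp_cat last_cat !last_rcons.
  apply: le_trans (IH a l3 hs3).
  apply: le_trans (le_mul2r (pp a l3) (cycle_le hu)) _.
  rewrite smul1; exact: le_refl.
case: el => ea el; subst b.
have el' : l = rcons l1 v ++ (rcons l2 v ++ l3) by rewrite el !cat_rcons.
pose l' := rcons l1 v ++ l3.
have hs' : size l' < N.
  by move: hN; rewrite el' /l' !size_cat !size_rcons; move: (size l1) (size l2) (size l3) => p q r; lia.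
have -> : last a l = last a l' by rewrite el' /l' !last_cat !last_rcons.
apply: le_trans (IH a l' hs').
rewrite el' /l' !pp_cat !last_rcons.
apply: le_mul2l.
apply: le_trans (le_mul2r (pp v l3) (cycle_le hu)) _.
rewrite smul1; exact: le_refl.
Qed.

Lemma mul_pow_le_star i k j (p : 'I_n) :
  sle (smul (M i k) (mxpow M p k j)) (mxstar M i j).
Proof.
case: (pow_path p k j) => [->|[l [_ hl ->]]]; first by rewrite smul0r; exact: le0.
have := path_le_star i (k :: l); rewrite /= hl; exact.
Qed.

End Paths.

Lemma mulCA (a b c : X) : smul a (smul b c) = smul b (smul a c).
Proof. by rewrite !smulA (smulC a). Qed.
Lemma mulAC (a b c : X) : smul (smul a b) c = smul (smul a c) b.
Proof. by rewrite -!smulA (smulC b). Qed.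

Section Star.
Variable n : nat.
Hypothesis Hn : 0 < n.
Variable M : mat X n.

Lemma pow_le (x : vec X n) (hx : forall l k, sle (smul (M l k) (x k)) (x l)) p i k :
  sle (smul (mxpow M p i k) (x k)) (x i).
Proof.
elim: p i k => [|p IH] i k.
  rewrite /mxpow /= /mxid; case: eqP => [->|_]; first by rewrite smul1; exact: le_refl.
  by rewrite smul0; exact: le0.
rewrite mxpowS /mxmul big_distl; apply: le_big => l _.
rewrite -smulA; exact: le_trans (le_mul2l _ (hx l k)) (IH i l).
Qed.

Lemma star_fix (x : vec X n) (hx : forall l k, sle (smul (M l k) (x k)) (x l)) i :
  mxvmul (mxstar M) x i = x i.
Proof.
apply: le_anti.
  apply: le_big => k _; rewrite /mxstar big_distl; apply: le_big => p _.
  exact: pow_le.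
apply: le_trans (big_geT (fun k => smul (mxstar M i k) (x k)) i).
apply: le_trans (le_mul2r (x i) (big_geT (fun p : 'I_n => mxpow M p i i) (Ordinal Hn))).
by rewrite /mxpow /= /mxid eqxx smul1; exact: le_refl.
Qed.

Hypothesis hcyc : forall k (s : {ffun 'I_k -> 'I_n}), 0 < k -> k <= n ->
  sle (cycle_prod M s) 1s.

Lemma star_sub (u : vec X n) l k :
  sle (smul (M l k) (mxvmul (mxstar M) u k)) (mxvmul (mxstar M) u l).
Proof.
rewrite /mxvmul big_distr; apply: le_big => j _.
rewrite smulA; apply: le_trans (big_geT (fun j => smul (mxstar M l j) (u j)) j).
apply: le_mul2r; rewrite /mxstar big_distr; apply: le_big => p _.
exact: mul_pow_le_star.
Qed.

End Star.

Section Spec.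
Variable n : nat.
Hypothesis Hn : 0 < n.

Definition qf (M : mat X n) (x : vec X n) : X :=
  \big[sadd/0s]_(i < n) \big[sadd/0s]_(k < n) smul (smul (sinv (x i)) (M i k)) (x k).

Lemma dist_qf (M : mat X n) x : reciprocal M -> mxdist M (outer_conj x) = qf M x.
Proof.
move=> hM; rewrite /mxdist /mxtr /mxmul /mxconj /outer_conj.
have e1 : \big[sadd/0s]_(i < n) \big[sadd/0s]_(k < n)
   smul (sinv (smul (x k) (sinv (x i)))) (M k i) = qf M x.
  rewrite /qf exchange_big; apply: eq_bigr => k _; apply: eq_bigr => i _.
  by rewrite invM invK mulAC.
have e2 : \big[sadd/0s]_(i < n) \big[sadd/0s]_(k < n)
   smul (sinv (M k i)) (smul (x k) (sinv (x i))) = qf M x.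
  rewrite /qf; apply: eq_bigr => i _; apply: eq_bigr => k _.
  have -> : sinv (M k i) = M i k by exact: hM.
  by rewrite smulA (smulC (sinv (x i))) mulAC.
by rewrite e1 e2 saddxx.
Qed.

Lemma obj_qf m (A : 'I_m -> mat X n) (w : 'I_m -> X) (HA : forall l, reciprocal (A l)) x :
  \big[sadd/0s]_(l < m) smul (w l) (mxdist (A l) (outer_conj x)) =
  qf (fun i j => \big[sadd/0s]_(l < m) smul (w l) (A l i j)) x.
Proof.
under eq_bigr => l _ do rewrite dist_qf // /qf big_distr.
rewrite exchange_big /qf; apply: eq_bigr => i _.
under eq_bigr => l _ do rewrite big_distr.
rewrite exchange_big; apply: eq_bigr => k _.
rewrite big_distr big_distl; apply: eq_bigr => l _.
by rewrite -smulA mulCA !smulA.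
Qed.

Lemma spec_ge (M : mat X n) k (s : {ffun 'I_k -> 'I_n}) : 0 < k -> k <= n ->
  sle (sroot k (cycle_prod M s)) (spec_rad M).
Proof.
move=> h0 hk; rewrite /spec_rad.
apply: le_trans (big_ge (fun k => \big[sadd/0s]_(s : {ffun 'I_k -> 'I_n}) sroot k (cycle_prod M s)) (P := xpredT) _ isT).
  exact: (big_geT (fun s : {ffun 'I_k -> 'I_n} => sroot k (cycle_prod M s))).
by rewrite mem_index_iota h0 ltnS.
Qed.

Lemma spec_nz (M : mat X n) : (forall i, M i i <> 0s) -> spec_rad M <> 0s.
Proof.
move=> hM; pose i0 := Ordinal Hn.
pose s := [ffun _ : 'I_1 => i0].
have := @spec_ge M 1 s isT Hn.
have -> : cycle_prod M s = M i0 i0 by rewrite /cycle_prod big_ord1 !ffunE.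
have := sroot_spec (M i0 i0) (isT : 0 < 1); rewrite /= smul1r => ->.
move=> h; exact: le_neq0 h (hM i0).
Qed.

Lemma scaled_cyc (M : mat X n) (hmu : spec_rad M <> 0s) k (s : {ffun 'I_k -> 'I_n}) :
  0 < k -> k <= n -> sle (cycle_prod (mxscale (sinv (spec_rad M)) M) s) 1s.
Proof.
move=> h0 hk; set mu := spec_rad M.
have e : cycle_prod (mxscale (sinv mu) M) s = smul (spow (sinv mu) k) (cycle_prod M s).
  by rewrite /cycle_prod /mxscale big_split /= big_const_ord.
rewrite e; have := sroot_spec (cycle_prod M s) h0.
rewrite -/(spow _ _) => <-.
apply: le_trans (le_mul2l _ (le_spow k (@spec_ge M k s h0 hk))) _.
by rewrite -spow_mul mulVs // spow1; exact: le_refl.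
Qed.

Lemma qf_lower (M : mat X n) x : regular x -> sle (spec_rad M) (qf M x).
Proof.
move=> hx; set q := qf M x.
have hB : forall i j, sle (M i j) (smul (smul (x i) (sinv (x j))) q).
  move=> i j.
  have h : sle (smul (smul (sinv (x i)) (M i j)) (x j)) q.
    apply: le_trans (big_geT (fun i => \big[sadd/0s]_(k < n) smul (smul (sinv (x i)) (M i k)) (x k)) i).
    exact: (big_geT (fun k => smul (smul (sinv (x i)) (M i k)) (x k)) j).
  have := le_mul2l (smul (x i) (sinv (x j))) h.
  have -> : smul (smul (x i) (sinv (x j))) (smul (smul (sinv (x i)) (M i j)) (x j)) = M i j.
    rewrite -!smulA (mulCA (sinv (x j))) (mulCA (sinv (x j))) (smulC _ (x j)) (smulV (hx j)) smul1r.
    by rewrite smulA (smulV (hx i)) smul1.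
  by [].
apply: le_big_seq => k; rewrite mem_index_iota => /andP[h0 hk] _.
apply: le_big => s _.
apply: (spow_cancel h0); rewrite -/(spow _ _) /spow sroot_spec // -/(spow q k).
rewrite /cycle_prod.
apply: le_trans (@le_prod2 _ (index_enum _) xpredT _ _ (fun j _ => hB (s j) (s (ordS j)))) _.
rewrite big_split /= big_const_ord -/(spow q k).
rewrite big_split /= -(reindex_inj (h := @ordS k) (P := xpredT) (F := fun j => sinv (x (s j))) (@ordS_inj k)) /=.
rewrite -big_split /= big1 ?smul1; first exact: le_refl.
by move=> j _; exact: smulV.
Qed.

Lemma qf_equiv (M : mat X n) x c : regular x -> c <> 0s ->
  (sle (qf M x) c <-> forall l k, sle (smul (mxscale (sinv c) M l k) (x k)) (x l)).
Proof.
move=> hx hc; split.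
  move=> h l k.
  have h1 : sle (smul (smul (sinv (x l)) (M l k)) (x k)) c.
    apply: le_trans h.
    apply: le_trans (big_geT (fun i => \big[sadd/0s]_(k < n) smul (smul (sinv (x i)) (M i k)) (x k)) l).
    exact: (big_geT (fun k => smul (smul (sinv (x l)) (M l k)) (x k)) k).
  have := le_mul2l (smul (x l) (sinv c)) h1.
  have -> : smul (smul (x l) (sinv c)) c = x l by rewrite -smulA mulVs // smul1r.
  have -> : smul (smul (x l) (sinv c)) (smul (smul (sinv (x l)) (M l k)) (x k)) =
            smul (smul (sinv c) (M l k)) (x k).
    rewrite -!smulA (mulCA (x l)); congr smul.
    by rewrite smulA (smulV (hx l)) smul1.
  by [].
move=> h; apply: le_big => l _; apply: le_big => k _.
have := le_mul2l (smul c (sinv (x l))) (h l k).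
have -> : smul (smul c (sinv (x l))) (x l) = c by rewrite -smulA mulVs // smul1r.
have -> : smul (smul c (sinv (x l))) (smul (mxscale (sinv c) M l k) (x k)) =
          smul (smul (sinv (x l)) (M l k)) (x k).
  rewrite /mxscale -!smulA (mulCA c); congr smul.
  by rewrite smulA (smulV hc) smul1.
by [].
Qed.

Lemma star_regular (M : mat X n) (hM : forall i j, M i j <> 0s) u :
  vec_nonzero u -> regular (mxvmul (mxstar M) u).
Proof.
move=> hu i.
have [k hk] : exists k, u k <> 0s.
  by apply: NNPP => h; apply: hu => k; apply: NNPP => h'; apply: h; exists k.
have hst : mxstar M i k <> 0s.
  case: (eqVneq i k) => [<-|hik].
    apply: (le_neq0 (big_geT (fun p : 'I_n => mxpow M p i i) (Ordinal Hn))).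
    by rewrite /mxpow /= /mxid eqxx; exact: (@sone_neq0 X).
  have h1 : 1 < n.
    have := ltn_ord i; have := ltn_ord k.
    have : (i : nat) <> k by move=> e; move: hik; rewrite (val_inj e) eqxx.
    move: (i : nat) (k : nat) => a b; lia.
  apply: (le_neq0 (big_geT (fun p : 'I_n => mxpow M p i k) (Ordinal h1))).
  rewrite /mxpow /= /mxmul.
  apply: (le_neq0 (big_geT (fun l => smul (mxid X i l) (M l k)) i)).
  by rewrite /mxid eqxx smul1; exact: hM.
apply: (le_neq0 (big_geT (fun k => smul (mxstar M i k) (u k)) k)).
exact: mul_neq0.
Qed.

End Spec.

Lemma main (n m : nat) (Hn : 0 < n)
  (A : 'I_m -> mat X n) (w : 'I_m -> X)
  (HA : forall l, reciprocal (A l)) :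
  let B : mat X n := fun i j => \big[@Defs.sadd X/szero X]_(l < m) Defs.smul (w l) (A l i j) in
  let mu := spec_rad B in
  let Bmu : mat X n := mxscale (sinv mu) B in
  let obj (x : vec X n) : X :=
    \big[@Defs.sadd X/szero X]_(l < m) Defs.smul (w l) (mxdist (A l) (outer_conj x)) in
  (forall i j, B i j <> szero X) ->
  ((exists x : vec X n, regular x /\ obj x = mu) /\
   (forall x : vec X n, regular x -> sle mu (obj x))) /\
  (forall x : vec X n,
     (regular x /\ obj x = mu) <->
     (exists u : vec X n, vec_nonzero u /\ forall i, x i = mxvmul (mxstar Bmu) u i)).
Proof.
move=> B mu Bmu obj hB.
have hobj : forall x, obj x = qf B x by move=> x; exact: obj_qf.
have hmu : mu <> 0s by apply: spec_nz => // i; exact: hB.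
have hBmu : forall i j, Bmu i j <> 0s.
  by move=> i j; apply: mul_neq0; [exact: inv_neq0| exact: hB].
have hcyc := scaled_cyc hmu.
have back : forall x, (exists u : vec X n, vec_nonzero u /\ forall i, x i = mxvmul (mxstar Bmu) u i) ->
    regular x /\ obj x = mu.
  move=> x [u [hu hx]].
  have hreg : regular x by move=> i; rewrite hx; exact: star_regular.
  split => //; rewrite hobj; apply: le_anti; last exact: qf_lower.
  apply/(qf_equiv B hreg hmu) => l k; rewrite !hx; exact: star_sub.
split; first split.
- pose u : vec X n := fun _ => 1s.
  exists (mxvmul (mxstar Bmu) u); apply: back; exists u; split => //.
  by move=> h; apply: (@sone_neq0 X); exact: (h (Ordinal Hn)).
- by move=> x hx; rewrite hobj; exact: qf_lower.
move=> x; split; last exact: back.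
move=> [hx ho]; exists x; split.
  by move=> h; exact: (hx (Ordinal Hn) (h _)).
move=> i; symmetry; apply: star_fix => //.
by apply/(qf_equiv B hx hmu); rewrite -hobj ho; exact: le_refl.
Qed.
End S.

Theorem corollary3 (X : idem_semifield) (n m : nat) (Hn : 0 < n)
  (A : 'I_m -> mat X n) (w : 'I_m -> X)
  (HA : forall l, reciprocal (A l)) :
  let B : mat X n := fun i j => \big[@sadd X/szero X]_(l < m) smul (w l) (A l i j) in
  let mu := spec_rad B in
  let Bmu : mat X n := mxscale (sinv mu) B in
  let obj (x : vec X n) : X :=
    \big[@sadd X/szero X]_(l < m) smul (w l) (mxdist (A l) (outer_conj x)) in
  (forall i j, B i j <> szero X) ->
  ((exists x : vec X n, regular x /\ obj x = mu) /\
   (forall x : vec X n, regular x -> sle mu (obj x))) /\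
  (forall x : vec X n,
     (regular x /\ obj x = mu) <->
     (exists u : vec X n, vec_nonzero u /\ forall i, x i = mxvmul (mxstar Bmu) u i)).
Proof. exact: (@main X n m Hn A w HA). Qed.
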